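(* Let $\mathfrak{u}_s(1,1)=\{T\in M_2(\mathbb{C}): T=T^*,\ T^*I_{1,1}+I_{1,1}T=0\}$ and let $\mathbf{U}_{s+}(1,1)=\{M\in\mathbf{U}_s(1,1):\operatorname{Tr}(M)\geq 2\}$. Then $\exp(\mathfrak{u}_s(1,1))=\mathbf{U}_{s+}(1,1)$, where $\exp$ is the matrix exponential. Moreover, every element of $\exp(\mathfrak{u}_s(1,1))$ is equivalent (under $\sim$) to exactly one element of $G_+=\{M_t:t\geq 0\}$, where $M_t=\begin{pmatrix}\cosh t&\sinh t\\ \sinh t&\cosh t\end{pmatrix}$; i.e. $\exp(\mathfrak{u}_s(1,1))/\!\sim\;=G_+$.
   Context: $I_{1,1}=\mathrm{diag}\{1,-1\}$; $T^*$ is the conjugate transpose. $\mathbf{U}_s(1,1)=\{M\in\mathbf{GL}(2,\mathbb{C}): M=M^*,\ M^*I_{1,1}M=I_{1,1}\}$. The equivalence $\sim$ on $2\times 2$ matrices in $\mathbf{U}(1,1)=\{M: M^*I_{1,1}M=I_{1,1}\}$ is the one defined by: $M_1\sim M_2$ if $M_1=\pm M_2$ or $M_1=Q^*M_2Q$ for some $Q\in\mathbf{U}(1)\oplus\mathbf{U}(1)$ (diagonal matrices with unimodular diagonal entries), taken as the equivalence relation these relations generate. *)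

(* Defs.v *)
From HB Require Import structures.
From mathcomp Require Import all_boot all_order all_algebra.
From mathcomp Require Import all_classical all_reals all_analysis.
From mathcomp Require Import complex.
From Stdlib Require Import Relation_Operators.
Set Implicit Arguments. Unset Strict Implicit. Unset Printing Implicit Defensive.
Import Order.TTheory GRing.Theory Num.Theory.
Import numFieldNormedType.Exports.
Local Open Scope classical_set_scope.
Local Open Scope ring_scope.

Section Defs.
Variable R : realType.
Local Notation C := R[i].

Definition mxstar (M : 'M[C]_2) : 'M[C]_2 := \matrix_(i, j) conjc (M j i).

Definition I11 : 'M[C]_2 :=
  \matrix_(i, j) (if i == j then (if i == 0 then 1 else -1) else 0).

Definition inU11 (M : 'M[C]_2) : Prop := mxstar M *m I11 *m M = I11.

Definition inUs11 (M : 'M[C]_2) : Prop :=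
  M \in unitmx /\ M = mxstar M /\ mxstar M *m I11 *m M = I11.

Definition inUsplus (M : 'M[C]_2) : Prop := inUs11 M /\ 2 <= \tr M.

Definition in_us11 (T : 'M[C]_2) : Prop :=
  T = mxstar T /\ mxstar T *m I11 + I11 *m T = 0.

Definition inU1U1 (Q : 'M[C]_2) : Prop :=
  (forall i j : 'I_2, i != j -> Q i j = 0) /\ (forall i : 'I_2, `|Q i i| = 1).

Definition sim0 (M1 M2 : 'M[C]_2) : Prop :=
  M1 = M2 \/ M1 = - M2 \/ exists Q, inU1U1 Q /\ M1 = mxstar Q *m M2 *m Q.

Definition sim (M1 M2 : 'M[C]_2) : Prop := clos_refl_sym_trans _ sim0 M1 M2.

Definition expm_partial (T : 'M[C]_2) (N : nat) : 'M[C]_2 :=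
  \sum_(k < N) (k`!%:R)^-1 *: T ^+ k.

Definition is_expm (T E : 'M[C]_2) : Prop :=
  forall i j : 'I_2,
    (fun N => complex.Re (expm_partial T N i j)) @ \oo --> complex.Re (E i j) /\
    (fun N => complex.Im (expm_partial T N i j)) @ \oo --> complex.Im (E i j).

Definition in_exp_us11 (M : 'M[C]_2) : Prop :=
  exists T, in_us11 T /\ is_expm T M.

Definition coshR (t : R) : R := (expR t + expR (- t)) / 2.
Definition sinhR (t : R) : R := (expR t - expR (- t)) / 2.

Definition Mt (t : R) : 'M[C]_2 :=
  \matrix_(i, j) (if i == j then (coshR t)%:C%C else (sinhR t)%:C%C).

End Defs.

(* Main.v *)
Require Import Defs.
From HB Require Import structures.
From mathcomp Require Import all_boot all_order all_algebra.
From mathcomp Require Import all_classical all_reals all_analysis.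
From mathcomp Require Import complex.
From mathcomp Require Import ring lra.
From Stdlib Require Import Relation_Operators.
Import Order.TTheory GRing.Theory Num.Theory.
Import numFieldNormedType.Exports.
Local Open Scope classical_set_scope.
Local Open Scope ring_scope.
Local Open Scope complex_scope.

Section S.
Variable R : realType.
Local Notation C := R[i].

Definition P (a : R) (c : C) : 'M[C]_2 :=
  \matrix_(i, j) (if i == j then a%:C else if i == 0 then c else c^*).

Lemma ord2 (i : 'I_2) : i = 0 \/ i = 1.
Proof. case: i => [[|[|k]] Hk]; [left|right|by []]; exact: val_inj. Qed.

Lemma mx2_eq (A B : 'M[C]_2) : A 0 0 = B 0 0 -> A 0 1 = B 0 1 ->
  A 1 0 = B 1 0 -> A 1 1 = B 1 1 -> A = B.
Proof.
move=> h1 h2 h3 h4; apply/matrixP => i j.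
by case: (ord2 i) => ->; case: (ord2 j) => ->.
Qed.

Lemma P00 a c : P a c 0 0 = a%:C. Proof. by rewrite mxE. Qed.
Lemma P01 a c : P a c 0 1 = c. Proof. by rewrite mxE. Qed.
Lemma P10 a c : P a c 1 0 = c^*. Proof. by rewrite mxE. Qed.
Lemma P11 a c : P a c 1 1 = a%:C. Proof. by rewrite mxE. Qed.

Lemma mul22 (A B : 'M[C]_2) i j : (A *m B) i j = A i 0 * B 0 j + A i 1 * B 1 j.
Proof.
rewrite mxE !big_ord_recl big_ord0 addr0.
by have -> : lift ord0 ord0 = 1 :> 'I_2 by apply/val_inj.
Qed.

Lemma I11E00 : I11 R 0 0 = 1. Proof. by rewrite mxE. Qed.
Lemma I11E01 : I11 R 0 1 = 0. Proof. by rewrite mxE. Qed.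
Lemma I11E10 : I11 R 1 0 = 0. Proof. by rewrite mxE. Qed.
Lemma I11E11 : I11 R 1 1 = -1. Proof. by rewrite mxE. Qed.

Lemma starE (M : 'M[C]_2) i j : mxstar M i j = (M j i)^*.
Proof. by rewrite mxE. Qed.

Definition nr (c : C) : R := Num.sqrt (complex.Re c ^+ 2 + complex.Im c ^+ 2).
Lemma normE (c : C) : `|c| = (nr c)%:C.
Proof. exact: normc_def. Qed.
Lemma nr_ge0 c : 0 <= nr c. Proof. exact: sqrtr_ge0. Qed.
Lemma nrM c d : nr (c * d) = nr c * nr d.
Proof. apply: complexI; have := normrM c d; rewrite !normE => ->; by rewrite rmorphM. Qed.
Lemma nrN c : nr (- c) = nr c.
Proof. by have := normrN c; rewrite !normE => /complexI. Qed.
Lemma nrJ c : nr (c^*) = nr c.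
Proof. by have := normcJ c; rewrite !normE => /complexI. Qed.
Lemma nr_eq0 c : (nr c == 0) = (c == 0).
Proof. by rewrite -(normr_eq0 c) normE (inj_eq (@complexI R)). Qed.
Lemma nrR (x : R) : nr x%:C = `|x|.
Proof. by rewrite /nr /= expr0n addr0 sqrtr_sqr. Qed.
Lemma mulcJ' (c : C) : c * c^* = ((nr c) ^+ 2)%:C.
Proof.
case: c => a b /=; rewrite /nr /= sqr_sqrtr ?addr_ge0 ?sqr_ge0 //.
apply/eqP; rewrite eq_complex /=; apply/andP; split; apply/eqP; ring.
Qed.


Lemma I11sq : I11 R *m I11 R = 1%:M.
Proof.
apply: mx2_eq; rewrite !mul22 ?I11E00 ?I11E01 ?I11E10 ?I11E11 !mxE /=.
  all: ring.
Qed.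

Lemma unit_of_U (M : 'M[C]_2) : mxstar M *m I11 R *m M = I11 R -> M \in unitmx.
Proof.
move=> h; have: (I11 R *m mxstar M *m I11 R) *m M = 1%:M.
  by rewrite -!mulmxA (mulmxA (mxstar M)) h I11sq.
by case/mulmx1_unit.
Qed.

Lemma trace2 (M : 'M[C]_2) : \tr M = M 0 0 + M 1 1.
Proof.
rewrite /mxtrace !big_ord_recl big_ord0 addr0.
by have -> : lift ord0 ord0 = 1 :> 'I_2 by apply/val_inj.
Qed.

Lemma P_Usplus a c : 1 <= a -> a ^+ 2 = 1 + nr c ^+ 2 -> inUsplus (P a c).
Proof.
move=> ha hac.
have hstar : mxstar (P a c) = P a c.
  by apply: mx2_eq; rewrite !starE !mxE /= ?oppr0 ?conjcK.
have hU : mxstar (P a c) *m I11 R *m P a c = I11 R.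
  rewrite hstar; move: hac; rewrite /nr; clear hstar; case: c => x y /=.
  rewrite sqr_sqrtr ?addr_ge0 ?sqr_ge0 // => hac.
  apply: mx2_eq; rewrite !mul22 ?I11E00 ?I11E01 ?I11E10 ?I11E11 !mxE /=.
  1-4: apply/eqP; rewrite eq_complex /=; apply/andP; split; apply/eqP; nra.
split; first by split; [exact: unit_of_U| split].
rewrite trace2 !mxE /= lecE /=; apply/andP; split; first by rewrite addr0.
lra.
Qed.


Lemma cE (x y : C) : x = y -> complex.Re x = complex.Re y /\ complex.Im x = complex.Im y.
Proof. by move=> ->. Qed.

Lemma Usplus_P (M : 'M[C]_2) : inUsplus M ->
  exists a c, M = P a c /\ 1 <= a /\ a ^+ 2 = 1 + nr c ^+ 2.
Proof.
case=> [[_ [hstar hU]] htr].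
have /matrixP hs := hstar; have /matrixP hu := hU.
have s00 := hs 0 0; have s10 := hs 1 0; have s11 := hs 1 1.
have u00 := hu 0 0; have u11 := hu 1 1.
rewrite !mul22 ?I11E00 ?I11E01 ?I11E10 ?I11E11 !starE in u00 u11.
rewrite !starE in s00 s10 s11.
rewrite trace2 in htr.
exists (complex.Re (M 0 0)), (M 0 1).
suff [e1 e2 e3 h4 h5] : [/\ M 0 0 = (complex.Re (M 0 0))%:C, M 1 0 = (M 0 1)^*,
   M 1 1 = (complex.Re (M 0 0))%:C, 1 <= complex.Re (M 0 0) &
   complex.Re (M 0 0) ^+ 2 = 1 + nr (M 0 1) ^+ 2].
  split=> //; apply: mx2_eq; by rewrite ?P00 ?P01 ?P10 ?P11.
move: s00 s10 s11 u00 u11 htr; rewrite /nr.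
case: (M 0 0) => [p00 q00]; case: (M 0 1) => [p01 q01];
case: (M 1 0) => [p10 q10]; case: (M 1 1) => [p11 q11] /=.
rewrite sqr_sqrtr ?addr_ge0 ?sqr_ge0 //.
move=> /cE[a1 a2] /cE[b1 b2] /cE[c1 c2] /cE[d1 d2] /cE[f1 f2].
rewrite lecE /= => /andP[/eqP hi htr].
simpl in *.
have -> : q00 = 0 by lra.
have -> : q11 = 0 by lra.
have -> : q10 = - q01 by lra.
have e10 : p10 = p01 by lra.
rewrite e10 in d1.
have hsq : p00 ^+ 2 = p11 ^+ 2 by nra.
have ep : p11 = p00 by nra.
rewrite e10 ep; split => //; first by nra.
have z0 : q00 = 0 by lra.
have z1 : q10 = - q01 by lra.
rewrite z0 z1 in d1; nra.
Qed.


Fixpoint pq (r2 : R) (k : nat) : R * R :=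
  match k with 0 => (1, 0) | k'.+1 => ((r2 * (pq r2 k').2), (pq r2 k').1) end.

Lemma cjM (c : C) (x : R) : (c * x%:C)^* = c^* * x%:C.
Proof. by case: c => u v /=; apply/eqP; rewrite eq_complex /=; apply/andP; split; apply/eqP; ring. Qed.

Lemma powP (c : C) k : (P 0 c) ^+ k = P (pq (nr c ^+ 2) k).1 (c * (pq (nr c ^+ 2) k).2%:C).
Proof.
elim: k => [|k IH].
  rewrite expr0; apply: mx2_eq; rewrite !mxE /= ?mulr0 //.
  by rewrite rmorph0 conjc0.
rewrite exprSr -mulmxE IH /=; clear IH.
move: (pq _ k) => [p q] /=.
rewrite /nr; case: c => u v /=.
rewrite sqr_sqrtr ?addr_ge0 ?sqr_ge0 //.
apply: mx2_eq; rewrite !mul22 !mxE /=;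
  apply/eqP; rewrite eq_complex /=; apply/andP; split; apply/eqP; ring.
Qed.


Definition sp (c : C) N := \sum_(k < N) (k`!%:R)^-1 * (pq (nr c ^+ 2) k).1.
Definition sq (c : C) N := \sum_(k < N) (k`!%:R)^-1 * (pq (nr c ^+ 2) k).2.

Lemma factC k : ((k`!%:R)^-1 : C) = ((k`!%:R)^-1 : R)%:C.
Proof. by rewrite fmorphV rmorph_nat. Qed.

Lemma partialP c N : expm_partial (P 0 c) N = P (sp c N) (c * (sq c N)%:C).
Proof.
rewrite /expm_partial /sp /sq; elim: N => [|N IH].
  rewrite !big_ord0; apply: mx2_eq; rewrite !mxE /= ?mulr0 //.
  by rewrite conjc0.
rewrite !big_ord_recr /= IH powP factC.
move: (pq _ N) => [p q] /=.
move: (\sum_(i < N) _) (\sum_(i < N) _) => s1 s2.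
move: ((N`!%:R)^-1) => f.
case: c {IH} => u v /=.
apply: mx2_eq; rewrite !mxE /=;
  apply/eqP; rewrite eq_complex /=; apply/andP; split; apply/eqP; ring.
Qed.


Lemma pq_closed (r : R) k : (pq (r ^+ 2) k).1 = (r ^+ k + (- r) ^+ k) / 2 /\
  r * (pq (r ^+ 2) k).2 = (r ^+ k - (- r) ^+ k) / 2.
Proof.
elim: k => [|k [IH1 IH2]] /=; first by split; rewrite !expr0; field.
split.
  have -> : r ^+ 2 * (pq (r ^+ 2) k).2 = r * (r * (pq (r ^+ 2) k).2) by ring.
  rewrite IH2 !exprS; ring.
rewrite IH1 !exprS; ring.
Qed.

Lemma Sx (x : R) : series (exp_coeff x) @ \oo --> expR x.
Proof. exact: is_cvg_series_exp_coeff. Qed.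
Lemma Sx2 (x : R) N : series (exp_coeff x) N = \sum_(k < N) (x ^+ k / k`!%:R).
Proof. by rewrite /series /= big_mkord. Qed.

Lemma sp_eq c N : sp c N =
  (series (exp_coeff (nr c)) N + series (exp_coeff (- nr c)) N) / 2.
Proof.
rewrite !Sx2 -big_split /= mulr_suml /sp; apply: eq_bigr => k _.
by rewrite (pq_closed (nr c) k).1; ring.
Qed.

Lemma sq_eq c N : nr c * sq c N =
  (series (exp_coeff (nr c)) N - series (exp_coeff (- nr c)) N) / 2.
Proof.
rewrite !Sx2 -sumrB /= mulr_suml /sq mulr_sumr; apply: eq_bigr => k _.
have := (pq_closed (nr c) k).2; move: (pq _ k).2 => q h.
rewrite mulrCA h; ring.
Qed.

Lemma sp_cvg c : sp c @ \oo --> coshR (nr c).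
Proof.
have -> : sp c = fun N => (series (exp_coeff (nr c)) N + series (exp_coeff (- nr c)) N) / 2.
  by apply: funext => N; rewrite sp_eq.
apply: cvgMl; apply: cvgD; exact: Sx.
Qed.

Lemma sq_cvg c : c != 0 -> sq c @ \oo --> sinhR (nr c) / nr c.
Proof.
move=> c0; have r0 : nr c != 0 by rewrite nr_eq0.
have -> : sq c = fun N => (series (exp_coeff (nr c)) N - series (exp_coeff (- nr c)) N) / 2 / nr c.
  by apply: funext => N; rewrite -sq_eq; field.
apply: cvgMl; apply: cvgMl; apply: cvgB; exact: Sx.
Qed.


Lemma cvg_ext (f g : nat -> R) (L : R) : (forall N, f N = g N) -> g @ \oo --> L -> f @ \oo --> L.
Proof. by move=> h; have -> : f = g by apply: funext. Qed.

Lemma ReR (x : R) : complex.Re (x%:C) = x. Proof. by []. Qed.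
Lemma ImR (x : R) : complex.Im (x%:C) = 0. Proof. by []. Qed.
Lemma ReM (c : C) (x : R) : complex.Re (c * x%:C) = complex.Re c * x.
Proof. by case: c => u v /=; ring. Qed.
Lemma ImM (c : C) (x : R) : complex.Im (c * x%:C) = complex.Im c * x.
Proof. by case: c => u v /=; ring. Qed.
Lemma ReJM (c : C) (x : R) : complex.Re ((c * x%:C)^*) = complex.Re c * x.
Proof. by case: c => u v /=; ring. Qed.
Lemma ImJM (c : C) (x : R) : complex.Im ((c * x%:C)^*) = - complex.Im c * x.
Proof. by case: c => u v /=; ring. Qed.

Lemma expP c : is_expm (P 0 c) (P (coshR (nr c)) (c * (sinhR (nr c) / nr c)%:C)).
Proof.
have hq : forall k : R, (c = 0 -> k = 0) ->
    (fun N => k * sq c N) @ \oo --> k * (sinhR (nr c) / nr c).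
  move=> k hk; have [c0|c0] := eqVneq c 0.
    rewrite hk // mul0r; apply: (@cvg_ext _ (fun _ => 0)); last exact: cvg_cst.
    by move=> N; rewrite mul0r.
  apply: cvgMr; by apply: sq_cvg.
move=> i j; case: (ord2 i) => ->; case: (ord2 j) => ->; split.
- apply: (@cvg_ext _ (sp c)); last by rewrite P00 ReR; exact: sp_cvg.
  by move=> N; rewrite partialP P00 ReR.
- apply: (@cvg_ext _ (fun _ => 0)); last by rewrite P00 ImR; exact: cvg_cst.
  by move=> N; rewrite partialP P00 ImR.
- apply: (@cvg_ext _ (fun N => complex.Re c * sq c N)); last first.
    by rewrite P01 ReM; apply: hq => ->.
  by move=> N; rewrite partialP P01 ReM.
- apply: (@cvg_ext _ (fun N => complex.Im c * sq c N)); last first.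
    by rewrite P01 ImM; apply: hq => ->.
  by move=> N; rewrite partialP P01 ImM.
- apply: (@cvg_ext _ (fun N => complex.Re c * sq c N)); last first.
    by rewrite P10 ReJM; apply: hq => ->.
  by move=> N; rewrite partialP P10 ReJM.
- apply: (@cvg_ext _ (fun N => - complex.Im c * sq c N)); last first.
    by rewrite P10 ImJM; apply: hq => ->; rewrite oppr0.
  by move=> N; rewrite partialP P10 ImJM.
- apply: (@cvg_ext _ (sp c)); last by rewrite P11 ReR; exact: sp_cvg.
  by move=> N; rewrite partialP P11 ReR.
- apply: (@cvg_ext _ (fun _ => 0)); last by rewrite P11 ImR; exact: cvg_cst.
  by move=> N; rewrite partialP P11 ImR.
Qed.


Lemma cosh_sinh (t : R) : coshR t ^+ 2 = 1 + sinhR t ^+ 2.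
Proof.
rewrite /coshR /sinhR; have := expRxMexpNx_1 t.
move: (expR t) (expR (- t)) => e f h; nra.
Qed.

Lemma cosh_ge1 (t : R) : 1 <= coshR t.
Proof.
rewrite /coshR; have := expRxMexpNx_1 t; have := expR_gt0 t; have := expR_gt0 (- t).
move: (expR t) (expR (- t)) => e f hf he h.
have : 0 <= (e - f) ^+ 2 by exact: sqr_ge0.
nra.
Qed.

Lemma sinh0 : sinhR 0 = 0 :> R.
Proof. by rewrite /sinhR oppr0 subrr mul0r. Qed.
Lemma cosh0 : coshR 0 = 1 :> R.
Proof. by rewrite /coshR oppr0 expR0; field. Qed.

Lemma mul_sinh (r : R) : r * (sinhR r / r) = sinhR r.
Proof.
have [->|r0] := eqVneq r 0; first by rewrite sinh0 !mul0r.
by field.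
Qed.

Lemma sinh_ge0 (t : R) : 0 <= t -> 0 <= sinhR t.
Proof.
move=> t0; rewrite /sinhR; have : expR (- t) <= expR t by rewrite ler_expR; lra.
lra.
Qed.

Lemma sinh_lt (t1 t2 : R) : t1 < t2 -> sinhR t1 < sinhR t2.
Proof.
move=> h; rewrite /sinhR.
have h1 : expR t1 < expR t2 by rewrite ltr_expR.
have h2 : expR (- t2) < expR (- t1) by rewrite ltr_expR; lra.
lra.
Qed.

Lemma sinh_inj (t1 t2 : R) : sinhR t1 = sinhR t2 -> t1 = t2.
Proof.
move=> h; case: (ltgtP t1 t2) => // /sinh_lt; rewrite h; lra.
Qed.

Lemma solve_r (a n : R) : 1 <= a -> 0 <= n -> a ^+ 2 = 1 + n ^+ 2 ->
  exists r, [/\ 0 <= r, coshR r = a & sinhR r = n].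
Proof.
move=> ha hn h.
have hp : 0 < a + n by lra.
have hne : a + n != 0 by rewrite gt_eqF.
have hprod : (a + n) * (a - n) = 1 by nra.
have e1 : expR (ln (a + n)) = a + n by rewrite lnK // posrE.
have e2 : (a + n)^-1 = a - n by rewrite -[LHS]mulr1 -hprod mulKf.
exists (ln (a + n)); split.
- by apply: ln_ge0; lra.
- by rewrite /coshR expRN e1 e2; field.
- by rewrite /sinhR expRN e1 e2; field.
Qed.


Lemma starP a c : mxstar (P a c) = P a c.
Proof. by apply: mx2_eq; rewrite !starE !mxE /= ?oppr0 ?conjcK. Qed.

Lemma us11_P0 c : in_us11 (P 0 c).
Proof.
split; first by rewrite starP.
rewrite starP; case: c => u v.
apply: mx2_eq; rewrite !mxE !big_ord_recl !big_ord0 /= !mxE /=;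
  apply/eqP; rewrite eq_complex /=; apply/andP; split; apply/eqP; ring.
Qed.

Lemma us11_form (T : 'M[C]_2) : in_us11 T -> T = P 0 (T 0 1).
Proof.
case=> hs hu.
have /matrixP hs' := hs; have /matrixP hu' := hu.
have s00 := hs' 0 0; have s10 := hs' 1 0; have s11 := hs' 1 1.
have u00 := hu' 0 0; have u11 := hu' 1 1.
rewrite mxE !mul22 ?I11E00 ?I11E01 ?I11E10 ?I11E11 !starE ?mxE in u00.
rewrite mxE !mul22 ?I11E00 ?I11E01 ?I11E10 ?I11E11 !starE ?mxE in u11.
rewrite ?mulr0 ?mul0r ?addr0 ?add0r ?mulr1 ?mul1r in u00 u11.
rewrite !starE in s00 s10 s11.
apply: mx2_eq; rewrite ?P00 ?P01 ?P10 ?P11 //.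
- move: s00 u00; case: (T 0 0) => x y /cE[a1 a2] /cE[b1 b2]; simpl in *.
  apply/eqP; rewrite eq_complex /=; apply/andP; split; apply/eqP; lra.
- move: s11 u11; case: (T 1 1) => x y /cE[a1 a2] /cE[b1 b2]; simpl in *.
  apply/eqP; rewrite eq_complex /=; apply/andP; split; apply/eqP; lra.
Qed.

Lemma complex_ext (x y : C) : complex.Re x = complex.Re y -> complex.Im x = complex.Im y -> x = y.
Proof. by case: x => ? ?; case: y => ? ? /= -> ->. Qed.

Lemma expm_unique (T E1 E2 : 'M[C]_2) : is_expm T E1 -> is_expm T E2 -> E1 = E2.
Proof.
move=> h1 h2; apply/matrixP => i j.
have [a1 a2] := h1 i j; have [b1 b2] := h2 i j.
apply: complex_ext.
  by apply: (cvg_unique _ a1 b1); exact: norm_hausdorff.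
by apply: (cvg_unique _ a2 b2); exact: norm_hausdorff.
Qed.


Lemma div_cancel (x y : R) : x != 0 -> y != 0 -> x / y * (y / x) = 1.
Proof. by move=> hx hy; rewrite mulrA divfK // divff. Qed.

Lemma solve_c a b : 1 <= a -> a ^+ 2 = 1 + nr b ^+ 2 ->
  exists c, P a b = P (coshR (nr c)) (c * (sinhR (nr c) / nr c)%:C).
Proof.
move=> ha h.
have [r [r0 hc hs]] := @solve_r a (nr b) ha (nr_ge0 b) h.
have [b0|bn0] := eqVneq b 0.
  exists 0; have -> : nr 0 = 0 by rewrite -[0]/(0%:C) nrR normr0.
  rewrite cosh0 mul0r b0.
  have -> : a = 1 by move: h; rewrite b0 -[0]/(0%:C) nrR normr0; nra.
  by [].
have n0 : nr b != 0 by rewrite nr_eq0.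
have rn0 : r != 0 by apply: contra n0 => /eqP r0'; rewrite -hs r0' sinh0.
exists (b * (r / nr b)%:C).
have -> : nr (b * (r / nr b)%:C) = r.
  rewrite nrM nrR ger0_norm; first by field.
  by rewrite divr_ge0 ?nr_ge0.
rewrite hc hs -mulrA -rmorphM.
have e : r / nr b * (nr b / r) = 1 by exact: div_cancel.
by rewrite e rmorph1 mulr1.
Qed.

Lemma exp_in_Usplus c : inUsplus (P (coshR (nr c)) (c * (sinhR (nr c) / nr c)%:C)).
Proof.
apply: P_Usplus; first exact: cosh_ge1.
have e : nr c * `|sinhR (nr c) / nr c| = `|sinhR (nr c)| by rewrite -{1}(ger0_norm (nr_ge0 c)) -normrM mul_sinh.
rewrite nrM nrR e (real_normK (num_real _)); exact: cosh_sinh.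
Qed.

Lemma part1 (M : 'M[C]_2) : in_exp_us11 M <-> inUsplus M.
Proof.
split.
  case=> T [hT he]; rewrite (@us11_form T hT) in he.
  by rewrite (@expm_unique _ _ _ he (expP _)); exact: exp_in_Usplus.
move/Usplus_P => [a [b [-> [ha h]]]].
have [c ->] := @solve_c a b ha h.
exists (P 0 c); split; [exact: us11_P0 | exact: expP].
Qed.

Lemma Mt_P (t : R) : Mt t = P (coshR t) (sinhR t)%:C.
Proof. by apply: mx2_eq; rewrite !mxE /= ?oppr0. Qed.

Lemma part2 (t : R) : in_exp_us11 (Mt t).
Proof.
apply/part1; rewrite Mt_P; apply: P_Usplus; first exact: cosh_ge1.
by rewrite nrR (real_normK (num_real _)); exact: cosh_sinh.
Qed.


Lemma nr_unit (q : C) : `|q| = 1 -> nr q = 1.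
Proof. by rewrite normE => /(congr1 (@complex.Re R)). Qed.

Lemma sim0_inv (M1 M2 : 'M[C]_2) : sim0 M1 M2 -> nr (M1 0 1) = nr (M2 0 1).
Proof.
case=> [->|[->|[Q [[hoff hdiag] ->]]]] //.
  by rewrite mxE nrN.
rewrite !mul22 !starE (hoff 0 1) // (hoff 1 0) // conjc0.
by rewrite ?mulr0 ?mul0r ?addr0 ?add0r !nrM nrJ (@nr_unit _ (hdiag 0)) (@nr_unit _ (hdiag 1)) mulr1 mul1r.
Qed.

Lemma sim_inv (M1 M2 : 'M[C]_2) : sim M1 M2 -> nr (M1 0 1) = nr (M2 0 1).
Proof.
elim=> [x y /sim0_inv|x|x y _ ->|x y z _ -> _ ->] //.
Qed.

Definition Qm (u : C) : 'M[C]_2 :=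
  \matrix_(i, j) (if i == j then (if i == 0 then 1 else u) else 0).

Lemma exist_u (b : C) : exists u, nr u = 1 /\ (nr b)%:C * u = b.
Proof.
have [->|b0] := eqVneq b 0.
  by exists 1; rewrite -[1]/(1%:C) -[0]/(0%:C) !nrR normr1 normr0 mul0r.
have n0 : nr b != 0 by rewrite nr_eq0.
have nC0 : (nr b)%:C != 0.
  by apply: contra n0 => /eqP h; apply/eqP; exact: (congr1 (@complex.Re R) h).
exists (b / (nr b)%:C); split.
  rewrite nrM -fmorphV nrR ger0_norm ?invr_ge0 ?nr_ge0 //.
  by rewrite divff.
by rewrite mulrC divfK.
Qed.

Lemma part3_ex (M : 'M[C]_2) : in_exp_us11 M -> exists t, 0 <= t /\ sim M (Mt t).
Proof.
move/part1/Usplus_P => [a [b [-> [ha h]]]].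
have [r [r0 hc hs]] := @solve_r a (nr b) ha (nr_ge0 b) h.
exists r; split => //; rewrite Mt_P hc hs.
apply: rst_step; right; right.
have [u [hu hub]] := exist_u b.
exists (Qm u); split.
  split.
    by move=> i j; case: (ord2 i) => ->; case: (ord2 j) => -> //; rewrite mxE.
  move=> i; case: (ord2 i) => ->; rewrite mxE /=; first by rewrite normr1.
  by rewrite normE hu.
move: (nr b) hub => n hub; rewrite -hub.
move: hu; rewrite /nr; case: u {hub} => x y /= hu.
have hu2 : x ^+ 2 + y ^+ 2 = 1.
  by rewrite -(@sqr_sqrtr _ (x ^+ 2 + y ^+ 2)) ?addr_ge0 ?sqr_ge0 // hu expr1n.
apply: mx2_eq; rewrite !mul22 !starE !mxE /=;
  apply/eqP; rewrite eq_complex /=; apply/andP; split; apply/eqP; nra.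
Qed.

End S.

Theorem corollary4p2 (R : realType) :
  (forall M : 'M[R[i]]_2, in_exp_us11 M <-> inUsplus M) /\
  (forall t : R, 0 <= t -> in_exp_us11 (Mt t)) /\
  (forall M : 'M[R[i]]_2, in_exp_us11 M ->
     (exists t : R, 0 <= t /\ sim M (Mt t)) /\
     (forall t1 t2 : R, 0 <= t1 -> 0 <= t2 ->
        sim M (Mt t1) -> sim M (Mt t2) -> Mt t1 = Mt t2)).
Proof.
split; first by move=> M; exact: part1.
split; first by move=> t _; exact: part2.
move=> M hM; split; first exact: part3_ex.
move=> t1 t2 h1 h2 s1 s2.
have e := @sim_inv R _ _ s1; rewrite (@sim_inv R _ _ s2) !Mt_P !P01 !nrR !ger0_norm ?sinh_ge0 // in e.
by rewrite (@sinh_inj R _ _ e).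
Qed.
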